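(* Let $K$ be an algebraically closed field, $R=K[x_1,\dots,x_N]$, and let $P$ be a finite set of monomials of $R$. Suppose $P_0,\dots,P_r\subseteq P$ satisfy: (i) $\bigcup_{i=0}^r P_i=P$; (ii) $P_0$ has exactly one element; (iii) for every $i$ with $0<i\le r$ and any two distinct $p,p''\in P_i$, there exist $i'$ with $0\le i'<i$ and $p'\in P_{i'}$ such that $p'$ divides $pp''$. Then $G=P$ and $S_i=P_i$ ($i=0,\dots,r$) satisfy hypotheses (i)–(iii) of the following statement: (i) $\bigcup S_i=G$; (ii) $|S_0|=1$; (iii) the recursive procedure — 0. set $T=S_0$; 1. pick an indeterminate $z$ dividing the only element of $T$; 2. remove all monomials divisible by $z$ from every $S_i$ and from $G$; 3. if no element of $G$ is left, end, otherwise pick $j$ such that exactly one element is left in $S_j$ and set $T$ to the current $S_j$; 4. go to 1 — can always be performed and always terminates, regardless of the choices of $z$ and $j$.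
   Context: Monomials are products of indeterminates (with coefficient 1). ''Can always be performed'' means that whenever monomials of $G$ remain after step 2, some $S_j$ has exactly one remaining element. *)

(* Defs.v *)
From HB Require Import structures.
From mathcomp Require Import all_boot all_order all_algebra.
From mathcomp Require Import finmap.
From mathcomp Require Import mpoly.
Set Implicit Arguments. Unset Strict Implicit. Unset Printing Implicit Defensive.
Local Open Scope fset_scope.

(* A monomial x^m of R = K[x_1..x_N] is represented by its exponent vector
   m : 'X_{1..N} (multinomials), i.e. the monomial 'X_[m] of {mpoly K[N]}.
   Product of monomials = (m1 + m2)%MM, divisibility 'X_[m1] | 'X_[m2]
   <=> (m1 <= m2)%MM (pointwise). Indeterminate x_z (z : 'I_N) divides x^m
   iff 0 < m z. *)

Definition mon_dvd (N : nat) (m1 m2 : 'X_{1..N}) : bool := (m1 <= m2)%MM.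
Definition mon_mul (N : nat) (m1 m2 : 'X_{1..N}) : 'X_{1..N} := (m1 + m2)%MM.

Definition var_dvd (N : nat) (z : 'I_N) (m : 'X_{1..N}) : bool := 0 < m z.

Definition remaining (N : nat) (zs : seq 'I_N) (A : {fset 'X_{1..N}}) :
  {fset 'X_{1..N}} := [fset m in A | all (fun z => ~~ var_dvd z m) zs].

(* The procedure. A state is (zs, t): zs = indeterminates chosen in step 1
   so far (cumulative removal), t = the only element of the current T.
   [init S s]: step 0, T = S_0 = [fset t]. *)
Definition proc_init (N r : nat) (S : 'I_r.+1 -> {fset 'X_{1..N}})
  (s : seq 'I_N * 'X_{1..N}) : Prop :=
  s.1 = [::] /\ S ord0 = [fset s.2].

(* One full round: step 1 picks z dividing the element of T, step 2 removes
   monomials divisible by z, step 3: G nonempty, and some current S_j has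
   exactly one element t', which becomes T. *)
Definition proc_step (N r : nat) (G : {fset 'X_{1..N}})
  (S : 'I_r.+1 -> {fset 'X_{1..N}}) (s s' : seq 'I_N * 'X_{1..N}) : Prop :=
  exists z : 'I_N, var_dvd z s.2 /\ s'.1 = rcons s.1 z /\
    remaining (rcons s.1 z) G != fset0 /\
    exists j : 'I_r.+1, remaining (rcons s.1 z) (S j) = [fset s'.2].

Inductive proc_reach (N r : nat) (G : {fset 'X_{1..N}})
  (S : 'I_r.+1 -> {fset 'X_{1..N}}) : seq 'I_N * 'X_{1..N} -> Prop :=
| reach_init s : proc_init S s -> proc_reach G S s
| reach_step s s' : proc_reach G S s -> proc_step G S s s' -> proc_reach G S s'.

Definition procedure_hyps (N r : nat) (G : {fset 'X_{1..N}})
  (S : 'I_r.+1 -> {fset 'X_{1..N}}) : Prop :=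
  (\big[fsetU/fset0]_(i < r.+1) S i = G)
  /\ #|` S ord0| = 1
  (* (iii) can always be performed: whenever monomials of G remain after
     step 2, some S_j has exactly one remaining element *)
  /\ (forall s, proc_reach G S s -> forall z : 'I_N, var_dvd z s.2 ->
        remaining (rcons s.1 z) G != fset0 ->
        exists j : 'I_r.+1, #|` remaining (rcons s.1 z) (S j)| = 1)
  (* (iii) always terminates: there is no infinite run *)
  /\ ~ (exists f : nat -> seq 'I_N * 'X_{1..N},
          proc_init S (f 0) /\ forall n, proc_step G S (f n) (f n.+1)).

(* Main.v *)
Require Import Defs.
From HB Require Import structures.
From mathcomp Require Import all_boot all_order all_algebra.
From mathcomp Require Import finmap.
From mathcomp Require Import mpoly.
Local Open Scope fset_scope.

Lemma rem_in (N : nat) (zs : seq 'I_N) (A : {fset 'X_{1..N}}) m :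
  (m \in remaining zs A) = (m \in A) && all (fun z => ~~ var_dvd z m) zs.
Proof. by rewrite /remaining !inE. Qed.

Theorem mainTheorem3 (K : closedFieldType) (N r : nat)
  (P : {fset 'X_{1..N}}) (Ps : 'I_r.+1 -> {fset 'X_{1..N}}) :
  (forall i, Ps i `<=` P) ->
  \big[fsetU/fset0]_(i < r.+1) Ps i = P ->
  #|` Ps ord0| = 1 ->
  (forall i : 'I_r.+1, 0 < i -> forall p p'', p \in Ps i -> p'' \in Ps i ->
     p != p'' ->
     exists i' : 'I_r.+1, i' < i /\
       exists2 p', p' \in Ps i' & mon_dvd p' (mon_mul p p'')) ->
  procedure_hyps P Ps.
Proof.
move=> _ HU H0 H3.
split; first exact: HU.
split; first exact: H0.
split.
  move=> s _ z _ /fset0Pn [m]; rewrite rem_in => /andP [mP mall].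
  set zs := rcons s.1 z.
  have key : forall n (i : 'I_r.+1), (i <= n)%N -> remaining zs (Ps i) != fset0 ->
      exists j : 'I_r.+1, #|` remaining zs (Ps j)| = 1.
    elim=> [|n IH] i lei ne.
    - have i0 : i = ord0 by apply: val_inj => /=; move: lei; rewrite leqn0 => /eqP.
      exists i; apply/eqP; rewrite eqn_leq; apply/andP; split.
        by rewrite -H0 i0; apply: fsubset_leq_card; apply: fset_sub.
      by rewrite lt0n cardfs_eq0.
    - have [c1|c1] := eqVneq #|` remaining zs (Ps i)| 1; first by exists i.
      have [i0|ipos] := posnP i.
        have i0' : i = ord0 by apply: val_inj.
        subst i.
        exfalso; move: c1 ne; rewrite -cardfs_eq0.
        have : (#|` remaining zs (Ps ord0)| <= 1)%N.
          by rewrite -H0; apply: fsubset_leq_card; apply: fset_sub.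
        by case: (#|` _|) => [|[|]].
      case/fset0Pn: ne => p pin.
      have : #|` remaining zs (Ps i) `\ p| != 0%N.
        by move: c1; rewrite (cardfsD1 p) pin; case: (#|` _|).
      rewrite cardfs_eq0 => /fset0Pn [p'' Hp]; move: Hp; rewrite in_fsetD1 => /andP [neq p''in].
      move: pin p''in; rewrite !rem_in => /andP [pin pall] /andP [p''in p''all].
      have neq' : p != p'' by rewrite eq_sym.
      have [i' [lti [p' p'in dv]]] := H3 i ipos p p'' pin p''in neq'.
      apply: (IH i').
        by rewrite -ltnS; apply: leq_trans lti _.
      apply/fset0Pn; exists p'; rewrite rem_in p'in /=.
      apply/allP => y yin; apply/negP => /= dy.
      move/forallP: dv => /(_ y); rewrite mnmDE.
      move/allP: pall => /(_ y yin); move/allP: p''all => /(_ y yin).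
      rewrite /var_dvd in dy *; rewrite -!eqn0Ngt => /eqP -> /eqP ->.
      by rewrite leqn0 => /eqP e; rewrite e in dy.
  have : m \in \big[fsetU/fset0]_(i < r.+1) Ps i by rewrite HU.
  case/bigfcupP => i _ mi.
  apply: (key r i); first by rewrite -ltnS.
  by apply/fset0Pn; exists m; rewrite rem_in mi.
case=> f [[f01 f02] Hs].
have inv : forall n, all (fun z => ~~ var_dvd z (f n).2) (f n).1.
  case=> [|n]; first by rewrite f01.
  have [z [_ [e1 [_ [j Hj]]]]] := Hs n.
  have : (f n.+1).2 \in remaining (rcons (f n).1 z) (Ps j) by rewrite Hj fset11.
  by rewrite rem_in e1 => /andP [_].
have U : forall n, uniq (f n).1 /\ size (f n).1 = n.
  elim=> [|n [u sz]]; first by rewrite f01.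
  have [z [dz [-> _]]] := Hs n.
  rewrite rcons_uniq size_rcons sz u andbT; split=> //.
  apply/negP => zin; move/allP: (inv n) => /(_ z zin); by rewrite dz.
have [u sz] := U N.+1.
have := uniq_leq_size u (fun x _ => mem_enum 'I_N x).
by rewrite sz size_enum_ord ltnn.
Qed.
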